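(* For each integer $n \ge 2$ and real $\gamma$, consider the infinite graph with vertex set $\mathbb{Z}^+$ in which vertices $1,\ldots,n$ form a complete graph $K_n$, vertices $n,n+1,n+2,\ldots$ form an infinite path (edges $\{k,k+1\}$ for $k\ge n$), and vertex $n$ (the vertex where the path is attached) carries a self-loop of weight $\gamma$. Let $H$ be its adjacency operator on $\ell^2(\mathbb{Z}^+)$: in the standard basis $\{e_j\}$, $\langle e_n,He_n\rangle=\gamma$, $\langle e_i,He_j\rangle=1$ for distinct $i,j\in\{1,\ldots,n\}$, $\langle e_k,He_{k+1}\rangle=\langle e_{k+1},He_k\rangle=1$ for $k\ge n$, all other entries $0$. Let $z_1=n^{-1/2}\sum_{j=1}^n e_j$. If $\gamma = n+\mathcal{O}(1)$, then for $t=\pi/(2\sqrt{n})$, \[ \left|\langle e_n, e^{-itH} z_1\rangle\right| = 1+o(1). \]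
   Context: Asymptotic notation refers to $n\to\infty$, with $\gamma=\gamma_n$ such that $\gamma_n-n$ is bounded. The inner product is $\langle x,y\rangle=\sum_u \overline{x_u}y_u$. *)

(* Defs.v *)
From Stdlib Require Import Reals Arith.
From Coquelicot Require Import Coquelicot.
Open Scope R_scope.

(* Vectors on Z^+ are modelled as functions nat -> C; index 0 is unused
   (kept at 0).  All vectors considered below are finitely supported. *)

Definition Hact (n : nat) (gamma : R) (v : nat -> C) : nat -> C :=
  fun i =>
    if Nat.eqb i 0 then RtoC 0 else
    Cplus
     (Cplus
       (if Nat.eqb i n then Cmult (RtoC gamma) (v n) else RtoC 0)
       (if Nat.leb i n
        then sum_n_m (fun j => if Nat.eqb j i then RtoC 0 else v j) 1 n
        else RtoC 0))
     (Cplus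
       (if Nat.leb n i then v (S i) else RtoC 0)
       (if Nat.leb (S n) i then v (pred i) else RtoC 0)).

Definition Hpow (n : nat) (gamma : R) (k : nat) (v : nat -> C) : nat -> C :=
  Nat.iter k (Hact n gamma) v.

Definition z1 (n : nat) : nat -> C :=
  fun j => if andb (Nat.leb 1 j) (Nat.leb j n) then RtoC (/ sqrt (INR n)) else RtoC 0.

(* k-th term of the exponential series for <e_n, e^{-itH} z_1>:
   (-it)^k / k! * <e_n, H^k z_1>   (note <e_n, w> = w_n). *)
Definition amp_term (n : nat) (gamma t : R) (k : nat) : C :=
  Cmult (Cdiv (pow_n (Copp (Cmult Ci (RtoC t))) k) (RtoC (INR (fact k))))
        (Hpow n gamma k (z1 n) n).

(* <e_n, e^{-itH} z_1> : the sum of the (convergent, since H is bounded)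
   exponential series. *)
Definition amp (n : nat) (gamma t : R) : C :=
  lim (T := C_CompleteNormedModule) (filtermap (fun N => sum_n (amp_term n gamma t) N) eventually).

(* Main.v *)
Require Import Defs.
From Stdlib Require Import Reals Arith Lra Lia Psatz.
From Coquelicot Require Import Coquelicot.
Open Scope R_scope.

Definition Lr (n:nat) (ga:R) (v : nat -> R) (p:nat) : R :=
  match p with
  | O => (INR n - 2) * v 0%nat + v 1%nat
  | S O => (INR n - 1) * v 0%nat + ga * v 1%nat + v 2%nat
  | S (S q) => v (S q) + v (S (S (S q)))
  end.
Definition g0 (n : nat) (p : nat) : R :=
  match p with O | S O => / sqrt (INR n) | _ => 0 end.
Definition gk n ga k := Nat.iter k (Lr n ga) (g0 n).
Definition emb (n : nat) (w : nat -> R) (i : nat) : R :=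
  if Nat.eqb i 0 then 0 else if Nat.ltb i n then w 0%nat else w (i - n + 1)%nat.

Lemma sumC : forall f m, sum_n_m (fun j => RtoC (f j)) 1 m = RtoC (sum_n_m f 1 m).
Proof.
  intros f m; induction m.
  - rewrite !sum_n_m_zero by lia. reflexivity.
  - rewrite (sum_n_m_Chasles _ 1 m (S m)) by lia.
    rewrite (sum_n_m_Chasles f 1 m (S m)) by lia.
    rewrite IHm, !sum_n_n. unfold plus; simpl. rewrite RtoC_plus. reflexivity.
Qed.

Lemma sum_aux : forall n w i, (1 <= i)%nat -> forall m, (m < n)%nat ->
  sum_n_m (fun j => if Nat.eqb j i then 0 else emb n w j) 1 m
  = (INR m - (if Nat.leb i m then 1 else 0)) * w 0%nat.
Proof.
  intros n w i Hi m; induction m; intros Hm.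
  - rewrite sum_n_m_zero by lia. destruct (Nat.leb_spec0 i 0); [lia|]. simpl. unfold zero; simpl; ring.
  - rewrite (sum_n_m_Chasles _ 1 m (S m)) by lia. rewrite sum_n_n, IHm by lia.
    unfold emb.
    destruct (Nat.eqb_spec (S m) i); destruct (Nat.leb_spec0 i m); destruct (Nat.leb_spec0 i (S m));
    try lia;
    destruct (Nat.ltb_spec0 (S m) n); try lia; rewrite ?S_INR; unfold plus; simpl. all: ring.
Qed.

Lemma sum_full : forall n w i, (2 <= n)%nat -> (1 <= i <= n)%nat ->
  sum_n_m (fun j => if Nat.eqb j i then 0 else emb n w j) 1 n
  = if Nat.eqb i n then (INR n - 1) * w 0%nat else (INR n - 2) * w 0%nat + w 1%nat.
Proof.
  intros n w i Hn Hi.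
  replace n with (S (n-1)) at 1 by lia.
  rewrite (sum_n_m_Chasles _ 1 (n-1) (S (n-1))) by lia. rewrite sum_n_n, sum_aux by lia.
  replace (S (n-1)) with n by lia.
  unfold plus; simpl. unfold emb.
  rewrite minus_INR by lia. simpl.
  destruct (Nat.eqb_spec n i); destruct (Nat.eqb_spec i n); destruct (Nat.leb_spec0 i (n-1)); try lia;
  destruct (Nat.eqb_spec n 0); try lia; destruct (Nat.ltb_spec0 n n); try lia;
  replace (n - n + 1)%nat with 1%nat by lia; simpl; ring.
Qed.

Lemma Hact_emb : forall n ga v w, (2 <= n)%nat -> (forall i, v i = RtoC (emb n w i)) ->
  forall i, Hact n ga v i = RtoC (emb n (Lr n ga w) i).
Proof.
  intros n ga v w Hn Hv i. unfold Hact.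
  destruct (Nat.eqb_spec i 0) as [->|Hi0].
  { reflexivity. }
  assert (Hsum : (Nat.leb i n = true) -> sum_n_m (fun j => if Nat.eqb j i then RtoC 0 else v j) 1 n
     = RtoC (if Nat.eqb i n then (INR n - 1) * w 0%nat else (INR n - 2) * w 0%nat + w 1%nat)).
  { intros Hle. apply Nat.leb_le in Hle.
    rewrite (sum_n_m_ext _ (fun j => RtoC (if Nat.eqb j i then 0 else emb n w j))).
    2:{ intros j. destruct (Nat.eqb j i); auto. }
    rewrite sumC, sum_full by lia. reflexivity. }
  unfold emb at 1. destruct (Nat.eqb_spec i 0); [lia|].
  destruct (Nat.ltb_spec0 i n).
  - assert (Nat.leb i n = true) by (apply Nat.leb_le; lia).
    rewrite Hsum by auto. rewrite H.
    destruct (Nat.eqb_spec i n); [lia|].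
    destruct (Nat.leb_spec0 n i); [lia|]. destruct (Nat.leb_spec0 (S n) i); [lia|].
    simpl. 
    rewrite <- !RtoC_plus. f_equal. ring.
  - destruct (Nat.eqb_spec i n) as [->|Hin].
    + rewrite Hsum by (apply Nat.leb_le; lia). rewrite Nat.leb_refl.
      destruct (Nat.leb_spec0 (S n) n); [lia|].
      rewrite !Hv. unfold emb.
      destruct (Nat.eqb_spec n 0); [lia|]. destruct (Nat.ltb_spec0 n n); [lia|].
      destruct (Nat.eqb_spec (S n) 0); [lia|]. destruct (Nat.ltb_spec0 (S n) n); [lia|].
      replace (n - n + 1)%nat with 1%nat by lia. replace (S n - n + 1)%nat with 2%nat by lia.
      rewrite <- RtoC_mult, <- !RtoC_plus. f_equal. simpl. ring.
    + destruct (Nat.leb_spec0 i n); [lia|]. destruct (Nat.leb_spec0 n i); [|lia].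
      destruct (Nat.leb_spec0 (S n) i); [|lia].
      rewrite !Hv. unfold emb.
      destruct (Nat.eqb_spec (S i) 0); [lia|]. destruct (Nat.ltb_spec0 (S i) n); [lia|].
      destruct (Nat.eqb_spec (pred i) 0); [lia|]. destruct (Nat.ltb_spec0 (pred i) n); [lia|].
      replace (i - n + 1)%nat with (S (S (i - n - 1))) by lia.
      replace (S i - n + 1)%nat with (S (S (S (i - n - 1)))) by lia.
      replace (pred i - n + 1)%nat with (S (i - n - 1)) by lia.
      rewrite <- !RtoC_plus. f_equal. simpl. ring.
Qed.

Lemma Hpow_emb : forall n ga k, (2 <= n)%nat ->
  forall i, Hpow n ga k (z1 n) i = RtoC (emb n (gk n ga k) i).
Proof.
  intros n ga k Hn. induction k; intros i.
  - simpl. unfold z1, emb.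
    destruct (Nat.eqb_spec i 0) as [->|]; [reflexivity|].
    destruct (Nat.leb_spec0 1 i); [|lia].
    destruct (Nat.ltb_spec0 i n); destruct (Nat.leb_spec0 i n); try lia; simpl; try reflexivity.
    + replace (i - n + 1)%nat with 1%nat by lia. reflexivity.
    + destruct (i - n + 1)%nat as [|[|q]] eqn:E; try lia. reflexivity.
  - unfold Hpow. simpl. apply Hact_emb; auto.
Qed.

Lemma term_le_exp : forall y n, 0 <= y -> y ^ n / INR (fact n) <= exp y.
Proof.
  intros y n Hy. destruct n.
  - simpl. pose proof (exp_ineq1_le y). lra.
  - pose proof (exp_ge_taylor y (S n) Hy). rewrite tech5 in H.
    assert (0 <= sum_f_R0 (fun k => y ^ k / INR (fact k)) n).
    { apply cond_pos_sum. intros k. apply Rmult_le_pos. apply pow_le; auto.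
      apply Rlt_le, Rinv_0_lt_compat, INR_fact_lt_0. }
    lra.
Qed.

Lemma exp_series_scaled : forall C y, is_series (fun k => C * (y ^ k / INR (fact k))) (C * exp y).
Proof.
  intros C y. pose proof (is_exp_Reals y) as H. unfold is_pseries in H.
  apply (is_series_scal C) in H.
  eapply is_series_ext; [|exact H]. intros k. simpl. rewrite pow_n_pow.
  unfold scal; simpl. unfold mult; simpl. field. apply INR_fact_neq_0.
Qed.

Lemma ps_bound : forall (a : nat -> R) C L, 0 <= L ->
  (forall k, Rabs (a k) <= C * L ^ k / INR (fact k)) -> forall x,
  Rbar_lt (Rabs x) (CV_radius a) /\ Rabs (PSeries a x) <= C * exp (L * Rabs x).
Proof.
  intros a C L HL Ha x.
  assert (HC : 0 <= C). { specialize (Ha 0%nat). simpl in Ha. pose proof (Rabs_pos (a 0%nat)). lra. }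
  assert (Hb : forall y k, Rabs (a k * y ^ k) <= C * ((L * Rabs y) ^ k / INR (fact k))).
  { intros y k. rewrite Rabs_mult, <- RPow_abs, Rpow_mult_distr.
    specialize (Ha k). pose proof (pow_le (Rabs y) k (Rabs_pos y)).
    pose proof (INR_fact_lt_0 k).
    replace (C * (L ^ k * Rabs y ^ k / INR (fact k))) with ((C * L ^ k / INR (fact k)) * Rabs y ^ k) by (field; lra).
    apply Rmult_le_compat_r; auto. }
  assert (Hconv : forall y, ex_series (fun k => Rabs (a k * y ^ k))).
  { intros y. apply (@ex_series_le R_AbsRing R_CompleteNormedModule _ (fun k => C * ((L * Rabs y) ^ k / INR (fact k)))).
    - intros k. unfold norm; simpl. unfold abs; simpl. rewrite Rabs_Rabsolu. apply Hb.
    - eexists. apply exp_series_scaled. }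
  split.
  - assert (Hle : Rbar_le (Rabs x + 1) (CV_radius a)).
    { apply (proj1 (CV_radius_bounded a)). exists (C * exp (L * Rabs (Rabs x + 1))).
      intros k. eapply Rle_trans. apply Hb. apply Rmult_le_compat_l; auto.
      apply term_le_exp. apply Rmult_le_pos; auto. apply Rabs_pos. }
    eapply Rbar_lt_le_trans; [|exact Hle]. simpl. lra.
  - unfold PSeries. eapply Rle_trans. apply Series_Rabs. apply Hconv.
    rewrite <- (is_series_unique _ _ (exp_series_scaled C (L * Rabs x))).
    apply Series_le.
    + intros k. split. apply Rabs_pos. apply Hb.
    + eexists. apply exp_series_scaled.
Qed.

Lemma der_plus f g t df dg : is_derive f t df -> is_derive g t dg -> is_derive (fun s => f s + g s) t (df + dg).
Proof. intros. apply (is_derive_plus f g); auto. Qed.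
Lemma der_minus f g t df dg : is_derive f t df -> is_derive g t dg -> is_derive (fun s => f s - g s) t (df - dg).
Proof. intros. apply (is_derive_minus f g); auto. Qed.
Lemma der_mult f g t df dg : is_derive f t df -> is_derive g t dg -> is_derive (fun s => f s * g s) t (df * g t + f t * dg).
Proof. intros. apply (is_derive_mult f g); auto. intros; apply Rmult_comm. Qed.
Lemma der_sq f t df : is_derive f t df -> is_derive (fun s => f s ^ 2) t (2 * f t * df).
Proof. intros. apply (is_derive_ext (fun s => f s * f s)). intros s; simpl; ring.
  replace (2 * f t * df) with (df * f t + f t * df) by ring. apply der_mult; auto. Qed.
Lemma der_scal c f t df : is_derive f t df -> is_derive (fun s => c * f s) t (c * df).
Proof. intros. apply (is_derive_scal f); auto. Qed.
Lemma der_ext (f : R -> R) (t d1 d2 : R) : is_derive f t d1 -> d1 = d2 -> is_derive f t d2.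
Proof. intros H Heq; rewrite <- Heq; auto. Qed.

Fixpoint Psum (X Y : nat -> R -> R) (m : nat) (t : R) : R :=
  match m with
  | O => X 2%nat t ^ 2 + Y 2%nat t ^ 2
  | S m' => Psum X Y m' t + X (S (S m)) t ^ 2 + Y (S (S m)) t ^ 2
  end.

Lemma Psum_ge X Y m t : X 2%nat t ^ 2 + Y 2%nat t ^ 2 <= Psum X Y m t.
Proof. induction m; simpl Psum. lra. nra. Qed.

Lemma Psum_derive (X Y : nat -> R -> R) :
  (forall p t, is_derive (X (S (S p))) t (-(Y (S p) t + Y (S (S (S p))) t))) ->
  (forall p t, is_derive (Y (S (S p))) t (X (S p) t + X (S (S (S p))) t)) ->
  forall m t, is_derive (Psum X Y m) t
    (2 * (Y 2%nat t * X 1%nat t - X 2%nat t * Y 1%nat t)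
     + 2 * (Y (m+2)%nat t * X (m+3)%nat t - X (m+2)%nat t * Y (m+3)%nat t)).
Proof.
  intros HX HY m t. induction m.
  - simpl. eapply der_ext. apply der_plus; apply der_sq; [apply (HX 0%nat)|apply (HY 0%nat)]. ring.
  - simpl Psum. eapply der_ext. apply der_plus; [apply der_plus|]; [exact IHm|apply der_sq, HX|apply der_sq, HY].
    replace (S m + 2)%nat with (S (S (S m))) by lia. replace (S m + 3)%nat with (S (S (S (S m)))) by lia.
    replace (m + 2)%nat with (S (S m)) by lia. replace (m + 3)%nat with (S (S (S m))) by lia. ring.
Qed.

Lemma Psum_0 (X Y : nat -> R -> R) : (forall p, X (S (S p)) 0 = 0) -> (forall p, Y (S (S p)) 0 = 0) ->
  forall m, Psum X Y m 0 = 0.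
Proof. intros HX HY m; induction m; simpl Psum; rewrite ?IHm, ?HX, ?HY; ring. Qed.

Lemma aux_u u s : 0 < s -> u ^ 2 <= 4 * (s * s) -> u <= 2 * s.
Proof. intros. nra. Qed.
Lemma aux_df u w s dl : 0 < s -> u <= 2 * s -> w <= dl -> (2 * u + 2 * w) / (2 * s) <= 2 + dl / s.
Proof. intros. apply (Rmult_le_reg_r (2 * s)). lra. field_simplify; try lra. Qed.
Lemma aux_lag a b c d E : 0 <= a^2 + b^2 <= E -> c^2 + d^2 <= 4 -> (b * c - a * d)^2 <= 4 * E.
Proof. intros. assert ((b*c - a*d)^2 + (a*c+b*d)^2 = (a^2+b^2)*(c^2+d^2)) by ring.
  assert ((a^2+b^2)*(c^2+d^2) <= E * 4). { apply Rmult_le_compat; try lra. nra. }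
  pose proof (pow2_ge_0 (a*c+b*d)). lra. Qed.

Lemma energy (sg al ga T eta dl : R) (m : nat) (X Y : nat -> R -> R) (xa ya xb yb : R -> R) :
 0 <= sg -> 0 <= T -> 0 < eta ->
 (forall t, is_derive (X 0%nat) t (-(al * Y 0%nat t + Y 1%nat t))) ->
 (forall t, is_derive (Y 0%nat) t (al * X 0%nat t + X 1%nat t)) ->
 (forall t, is_derive (X 1%nat) t (-(sg * Y 0%nat t + ga * Y 1%nat t + Y 2%nat t))) ->
 (forall t, is_derive (Y 1%nat) t (sg * X 0%nat t + ga * X 1%nat t + X 2%nat t)) ->
 (forall p t, is_derive (X (S (S p))) t (-(Y (S p) t + Y (S (S (S p))) t))) ->
 (forall p t, is_derive (Y (S (S p))) t (X (S p) t + X (S (S (S p))) t)) ->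
 (forall t, is_derive xa t (-(al * ya t + yb t))) ->
 (forall t, is_derive ya t (al * xa t + xb t)) ->
 (forall t, is_derive xb t (-(sg * ya t + ga * yb t))) ->
 (forall t, is_derive yb t (sg * xa t + ga * xb t)) ->
 X 0%nat 0 = xa 0 -> Y 0%nat 0 = ya 0 -> X 1%nat 0 = xb 0 -> Y 1%nat 0 = yb 0 ->
 (forall p, X (S (S p)) 0 = 0) -> (forall p, Y (S (S p)) 0 = 0) ->
 (forall t, 0 <= t <= T -> xb t ^ 2 + yb t ^ 2 <= 4) ->
 (forall t, 0 <= t <= T -> Rabs (Y (m+2)%nat t * X (m+3)%nat t - X (m+2)%nat t * Y (m+3)%nat t) <= dl) ->
 sqrt ((X 1%nat T - xb T) ^ 2 + (Y 1%nat T - yb T) ^ 2) <= sqrt eta + T * (2 + dl / sqrt eta).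
Proof.
  intros Hsg HT Heta HX0 HY0 HX1 HY1 HX HY Hxa Hya Hxb Hyb I1 I2 I3 I4 I5 I6 Hbd Hw.
  set (E := fun t => sg * ((X 0%nat t - xa t) ^ 2 + (Y 0%nat t - ya t) ^ 2)
     + (X 1%nat t - xb t) ^ 2 + (Y 1%nat t - yb t) ^ 2 + Psum X Y m t).
  set (dE := fun t => 2 * (Y 2%nat t * xb t - X 2%nat t * yb t)
     + 2 * (Y (m+2)%nat t * X (m+3)%nat t - X (m+2)%nat t * Y (m+3)%nat t)).
  assert (HE : forall t, is_derive E t (dE t)).
  { intros t. unfold E, dE. eapply der_ext.
    apply der_plus; [apply der_plus; [apply der_plus|]|].
    - apply der_scal. apply der_plus; apply der_sq; apply der_minus; eauto.
    - apply der_sq; apply der_minus; eauto.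
    - apply der_sq; apply der_minus; eauto.
    - apply Psum_derive; auto.
    - cbv beta. ring. }
  assert (HEpos : forall t, 0 <= E t).
  { intros t. unfold E. pose proof (Psum_ge X Y m t).
    assert (0 <= sg * ((X 0%nat t - xa t) ^ 2 + (Y 0%nat t - ya t) ^ 2)) by
      (apply Rmult_le_pos; [auto | apply Rplus_le_le_0_compat; apply pow2_ge_0]).
    pose proof (pow2_ge_0 (X 1%nat t - xb t)). pose proof (pow2_ge_0 (Y 1%nat t - yb t)).
    pose proof (pow2_ge_0 (X 2%nat t)). pose proof (pow2_ge_0 (Y 2%nat t)). lra. }
  assert (HE0 : E 0 = 0).
  { unfold E. rewrite Psum_0 by auto. rewrite I1, I2, I3, I4. ring. }
  set (F := fun t => sqrt (E t + eta)).
  set (dF := fun t => dE t / (2 * sqrt (E t + eta))).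
  assert (HF : forall t, is_derive F t (dF t)).
  { intros t. unfold F, dF. apply (is_derive_sqrt (fun s => E s + eta)).
    eapply der_ext. apply der_plus. apply HE. apply is_derive_const. unfold zero; simpl; ring.
    pose proof (HEpos t). lra. }
  destruct (MVT_gen F 0 T dF) as [c [Hc Hmvt]].
  { intros; apply HF. }
  { intros x _. apply continuity_pt_filterlim. apply (@ex_derive_continuous R_AbsRing R_NormedModule F x). eexists. apply HF. }
  rewrite Rmin_left in Hc by lra. rewrite Rmax_right in Hc by lra.
  assert (Hs : sqrt eta <= sqrt (E c + eta)).
  { apply sqrt_le_1_alt. pose proof (HEpos c). lra. }
  assert (Hseta : 0 < sqrt eta) by (apply sqrt_lt_R0; auto).
  set (s := sqrt (E c + eta)) in *.
  assert (Hs2 : s * s = E c + eta). { unfold s. apply sqrt_sqrt. pose proof (HEpos c). lra. }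
  assert (Hu : Y 2%nat c * xb c - X 2%nat c * yb c <= 2 * s).
  { pose proof (Psum_ge X Y m c). specialize (Hbd c Hc).
    assert (X 2%nat c ^ 2 + Y 2%nat c ^ 2 <= E c).
    { unfold E. assert (0 <= sg * ((X 0%nat c - xa c) ^ 2 + (Y 0%nat c - ya c) ^ 2)) by
      (apply Rmult_le_pos; [auto | apply Rplus_le_le_0_compat; apply pow2_ge_0]).
      pose proof (pow2_ge_0 (X 1%nat c - xb c)). pose proof (pow2_ge_0 (Y 1%nat c - yb c)). lra. }
    assert ((Y 2%nat c * xb c - X 2%nat c * yb c) ^ 2 <= 4 * (s * s)).
    { rewrite Hs2. eapply Rle_trans. apply aux_lag. split; [|eassumption].
      apply Rplus_le_le_0_compat; apply pow2_ge_0. auto. lra. }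
    apply aux_u; auto. lra. }
  assert (Hwc := Hw c Hc).
  assert (Hdl : 0 <= dl). { eapply Rle_trans. apply Rabs_pos. apply (Hw 0). lra. }
  assert (HdF : dF c <= 2 + dl / sqrt eta).
  { unfold dF. fold s. unfold dE.
    pose proof (Rle_abs (Y (m+2)%nat c * X (m+3)%nat c - X (m+2)%nat c * Y (m+3)%nat c)).
    assert (dl / s <= dl / sqrt eta).
    { apply Rmult_le_compat_l; auto. apply Rinv_le_contravar; auto. }
    assert (Hsp : 0 < s) by lra.
    apply (Rle_trans _ (2 + dl / s)); [|lra].
    apply aux_df; auto. lra. }
  assert (HFT : F T <= sqrt eta + T * (2 + dl / sqrt eta)).
  { assert (F 0 = sqrt eta) by (unfold F; rewrite HE0, Rplus_0_l; auto).
    assert (dF c * (T - 0) <= (2 + dl / sqrt eta) * T).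
    { rewrite Rminus_0_r. apply Rmult_le_compat_r; auto. }
    lra. }
  eapply Rle_trans; [|exact HFT]. unfold F. apply sqrt_le_1_alt.
  unfold E. pose proof (Psum_ge X Y m T).
  assert (0 <= sg * ((X 0%nat T - xa T) ^ 2 + (Y 0%nat T - ya T) ^ 2)) by
      (apply Rmult_le_pos; [auto | apply Rplus_le_le_0_compat; apply pow2_ge_0]).
  pose proof (pow2_ge_0 (X 2%nat T)). pose proof (pow2_ge_0 (Y 2%nat T)). lra.
Qed.

Definition cfX (c w z k t : R) := z * (cos (c * t) * cos (w * t) - sin (c * t) * k * sin (w * t)).
Definition cfY (c w z k t : R) := z * (sin (c * t) * cos (w * t) + cos (c * t) * k * sin (w * t)).

Section S.
Variables c d w z : R.
Hypothesis Hw : w <> 0.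
Let kA := (1 - d) / w.
Let kB := (w ^ 2 - d ^ 2 + d) / w.

Lemma ode_xa t : is_derive (cfX c w z kA) t (-((c - d) * cfY c w z kA t + cfY c w z kB t)).
Proof. unfold cfX, cfY, kA, kB. auto_derive; auto. field; auto. Qed.
Lemma ode_ya t : is_derive (cfY c w z kA) t ((c - d) * cfX c w z kA t + cfX c w z kB t).
Proof. unfold cfX, cfY, kA, kB. auto_derive; auto. field; auto. Qed.
Lemma ode_xb t : is_derive (cfX c w z kB) t (-((w^2 - d^2) * cfY c w z kA t + (c + d) * cfY c w z kB t)).
Proof. unfold cfX, cfY, kA, kB. auto_derive; auto. field; auto. Qed.
Lemma ode_yb t : is_derive (cfY c w z kB) t ((w^2 - d^2) * cfX c w z kA t + (c + d) * cfX c w z kB t).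
Proof. unfold cfX, cfY, kA, kB. auto_derive; auto. field; auto. Qed.
End S.

Lemma cf_norm c w z k t : cfX c w z k t ^ 2 + cfY c w z k t ^ 2 = z^2 * (cos (w*t) ^ 2 + k^2 * sin (w*t)^2).
Proof. unfold cfX, cfY. pose proof (sin2_cos2 (c*t)). unfold Rsqr in H. 
  replace (cos (c * t)) with (cos (c*t)) by auto. nra. Qed.

Fixpoint cs (k : nat) : R * R :=
  match k with O => (1, 0) | S k' => (- snd (cs k'), fst (cs k')) end.

Lemma cs_bound k : Rabs (fst (cs k)) <= 1 /\ Rabs (snd (cs k)) <= 1.
Proof. induction k; simpl. rewrite Rabs_R1, Rabs_R0; lra. rewrite Rabs_Ropp; lra. Qed.

Lemma PS_lin2 a b u v x : ex_pseries a x -> ex_pseries b x ->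
  PSeries (fun k => u * a k + v * b k) x = u * PSeries a x + v * PSeries b x.
Proof.
  intros Ha Hb. apply ex_pseries_R in Ha. apply ex_pseries_R in Hb. unfold PSeries.
  rewrite <- !Series_scal_l. rewrite <- Series_plus.
  - apply Series_ext. intros k. ring.
  - exact (@ex_series_scal_l R_AbsRing R_NormedModule u _ Ha).
  - exact (@ex_series_scal_l R_AbsRing R_NormedModule v _ Hb).
Qed.

Lemma PS_lin3 a b c u v w x : ex_pseries a x -> ex_pseries b x -> ex_pseries c x ->
  PSeries (fun k => u * a k + v * b k + w * c k) x = u * PSeries a x + v * PSeries b x + w * PSeries c x.
Proof.
  intros Ha Hb Hc. apply ex_pseries_R in Ha. apply ex_pseries_R in Hb. apply ex_pseries_R in Hc. unfold PSeries.
  assert (HA : ex_series (fun k => u * (a k * x ^ k))) by exact (@ex_series_scal_l R_AbsRing R_NormedModule u _ Ha).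
  assert (HB : ex_series (fun k => v * (b k * x ^ k))) by exact (@ex_series_scal_l R_AbsRing R_NormedModule v _ Hb).
  assert (HC : ex_series (fun k => w * (c k * x ^ k))) by exact (@ex_series_scal_l R_AbsRing R_NormedModule w _ Hc).
  rewrite <- !Series_scal_l. rewrite <- (Series_plus _ _ HA HB).
  rewrite <- Series_plus.
  - apply Series_ext. intros k. simpl. ring.
  - exact (@ex_series_plus R_AbsRing R_NormedModule _ _ HA HB).
  - exact HC.
Qed.

Section N.
Variable n : nat.
Variable ga : R.
Hypothesis Hn : (2 <= n)%nat.

Let K := INR n + Rabs ga + 2.
Let g := gk n ga.

Lemma Kpos : 0 <= K.
Proof. unfold K. pose proof (pos_INR n). pose proof (Rabs_pos ga). lra. Qed.

Lemma Lr_bound v B : (forall p, Rabs (v p) <= B) -> forall p, Rabs (Lr n ga v p) <= K * B.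
Proof.
  intros Hv p. assert (HB : 0 <= B) by (eapply Rle_trans; [apply Rabs_pos|apply (Hv 0%nat)]).
  assert (H2 : 2 <= INR n) by (apply (le_INR 2); lia).
  pose proof (Rabs_pos ga).
  destruct p as [|[|q]]; simpl Lr; unfold K.
  - eapply Rle_trans. apply Rabs_triang. rewrite Rabs_mult, (Rabs_right (INR n - 2)) by lra.
    pose proof (Hv 0%nat); pose proof (Hv 1%nat). nra.
  - eapply Rle_trans. apply Rabs_triang. eapply Rle_trans. apply Rplus_le_compat_r. apply Rabs_triang.
    rewrite !Rabs_mult, (Rabs_right (INR n - 1)) by lra.
    pose proof (Hv 0%nat); pose proof (Hv 1%nat); pose proof (Hv 2%nat).
    assert (Rabs ga * Rabs (v 1%nat) <= Rabs ga * B) by (apply Rmult_le_compat_l; auto). nra.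
  - eapply Rle_trans. apply Rabs_triang.
    pose proof (Hv (S q)); pose proof (Hv (S (S (S q)))). nra.
Qed.

Lemma g_bound k p : Rabs (g k p) <= K ^ k.
Proof.
  revert p. induction k; intros p.
  - simpl. unfold g, gk; simpl. destruct p as [|[|q]]; simpl.
    + assert (1 <= sqrt (INR n)). { rewrite <- sqrt_1. apply sqrt_le_1_alt. apply (le_INR 1); lia. }
      rewrite Rabs_right. apply (Rmult_le_reg_l (sqrt (INR n))); try lra. rewrite Rinv_r; lra.
      apply Rle_ge, Rlt_le, Rinv_0_lt_compat; lra.
    + assert (1 <= sqrt (INR n)). { rewrite <- sqrt_1. apply sqrt_le_1_alt. apply (le_INR 1); lia. }
      rewrite Rabs_right. apply (Rmult_le_reg_l (sqrt (INR n))); try lra. rewrite Rinv_r; lra.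
      apply Rle_ge, Rlt_le, Rinv_0_lt_compat; lra.
    + rewrite Rabs_R0; lra.
  - unfold g, gk. simpl Nat.iter. rewrite <- tech_pow_Rmult.
    replace (K * K ^ k) with (K * K ^ k) by auto. apply Lr_bound. exact IHk.
Qed.

Lemma g_zero k p : (S k < p)%nat -> g k p = 0.
Proof.
  revert p. induction k; intros p Hp.
  - unfold g, gk; simpl. destruct p as [|[|q]]; try lia. reflexivity.
  - unfold g, gk. simpl Nat.iter. destruct p as [|[|q]]; try lia. simpl Lr.
    fold (gk n ga k). fold g. rewrite !IHk by lia. ring.
Qed.

Lemma g_bound2 k p : Rabs (g k p) <= (/2) ^ (p - 1) * (2 * K) ^ k.
Proof.
  destruct (le_lt_dec p (S k)).
  - eapply Rle_trans. apply g_bound.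
    assert (E1: (2*K)^k = 2^(p-1) * 2^(k-(p-1)) * K^k) by
      (rewrite Rpow_mult_distr, <- pow_add; replace (p-1 + (k-(p-1)))%nat with k by lia; ring).
    rewrite E1.
    assert (H1: (/2)^(p-1) * 2^(p-1) = 1) by (rewrite <- Rpow_mult_distr; rewrite Rinv_l by lra; apply pow1).
    replace ((/ 2) ^ (p - 1) * (2 ^ (p - 1) * 2 ^ (k - (p - 1)) * K ^ k))
      with ((/2)^(p-1) * 2^(p-1) * 2 ^ (k - (p - 1)) * K ^ k) by ring.
    rewrite H1.
    pose proof (pow_le K k Kpos).
    assert (1 <= 2 ^ (k - (p - 1))) by (apply pow_R1_Rle; lra). nra.
  - rewrite g_zero by lia. rewrite Rabs_R0. apply Rmult_le_pos; apply pow_le; try lra.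
    pose proof Kpos; lra.
Qed.

Definition cx p k := fst (cs k) * g k p / INR (fact k).
Definition cy p k := snd (cs k) * g k p / INR (fact k).
Definition Xf p t := PSeries (cx p) t.
Definition Yf p t := PSeries (cy p) t.

Lemma cx_bound p k : Rabs (cx p k) <= (/2) ^ (p - 1) * (2 * K) ^ k / INR (fact k).
Proof.
  unfold cx, Rdiv. rewrite !Rabs_mult. rewrite (Rabs_right (/ INR (fact k))).
  2:{ apply Rle_ge, Rlt_le, Rinv_0_lt_compat, INR_fact_lt_0. }
  apply Rmult_le_compat_r. apply Rlt_le, Rinv_0_lt_compat, INR_fact_lt_0.
  pose proof (cs_bound k). pose proof (g_bound2 k p). pose proof (Rabs_pos (fst (cs k))).
  pose proof (Rabs_pos (g k p)). nra.
Qed.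
Lemma cy_bound p k : Rabs (cy p k) <= (/2) ^ (p - 1) * (2 * K) ^ k / INR (fact k).
Proof.
  unfold cy, Rdiv. rewrite !Rabs_mult. rewrite (Rabs_right (/ INR (fact k))).
  2:{ apply Rle_ge, Rlt_le, Rinv_0_lt_compat, INR_fact_lt_0. }
  apply Rmult_le_compat_r. apply Rlt_le, Rinv_0_lt_compat, INR_fact_lt_0.
  pose proof (cs_bound k). pose proof (g_bound2 k p). pose proof (Rabs_pos (snd (cs k))).
  pose proof (Rabs_pos (g k p)). nra.
Qed.

Lemma cx_ps p t : Rbar_lt (Rabs t) (CV_radius (cx p)) /\ Rabs (Xf p t) <= (/2) ^ (p - 1) * exp (2 * K * Rabs t).
Proof. apply ps_bound. pose proof Kpos; lra. intros k. apply cx_bound. Qed.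
Lemma cy_ps p t : Rbar_lt (Rabs t) (CV_radius (cy p)) /\ Rabs (Yf p t) <= (/2) ^ (p - 1) * exp (2 * K * Rabs t).
Proof. apply ps_bound. pose proof Kpos; lra. intros k. apply cy_bound. Qed.

Lemma exx p t : ex_pseries (cx p) t.
Proof. apply CV_radius_inside, cx_ps. Qed.
Lemma exy p t : ex_pseries (cy p) t.
Proof. apply CV_radius_inside, cy_ps. Qed.

Lemma dcx p : forall k, PS_derive (cx p) k = - (snd (cs k)) * Lr n ga (g k) p / INR (fact k).
Proof.
  intros k. unfold PS_derive, cx. simpl cs. unfold g, gk. simpl Nat.iter. fold (gk n ga k).
  rewrite fact_simpl, mult_INR. cbn [fst snd]. field. split. apply INR_fact_neq_0. apply not_0_INR; lia.
Qed.
Lemma dcy p : forall k, PS_derive (cy p) k = fst (cs k) * Lr n ga (g k) p / INR (fact k).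
Proof.
  intros k. unfold PS_derive, cy. simpl cs. unfold g, gk. simpl Nat.iter. fold (gk n ga k).
  rewrite fact_simpl, mult_INR. cbn [fst snd]. field. split. apply INR_fact_neq_0. apply not_0_INR; lia.
Qed.


Lemma dX0 t : is_derive (Xf 0) t (-((INR n - 2) * Yf 0 t + Yf 1 t)).
Proof.
  eapply der_ext. apply is_derive_PSeries. apply cx_ps.
  rewrite (PSeries_ext _ (fun k => (-(INR n - 2)) * cy 0 k + (-1) * cy 1 k)).
  rewrite PS_lin2 by apply exy. unfold Yf; ring.
  intros k. rewrite dcx. simpl Lr. unfold cy. field. apply INR_fact_neq_0.
Qed.
Lemma dY0 t : is_derive (Yf 0) t ((INR n - 2) * Xf 0 t + Xf 1 t).
Proof.
  eapply der_ext. apply is_derive_PSeries. apply cy_ps.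
  rewrite (PSeries_ext _ (fun k => (INR n - 2) * cx 0 k + 1 * cx 1 k)).
  rewrite PS_lin2 by apply exx. unfold Xf; ring.
  intros k. rewrite dcy. simpl Lr. unfold cx. field. apply INR_fact_neq_0.
Qed.
Lemma dX1 t : is_derive (Xf 1) t (-((INR n - 1) * Yf 0 t + ga * Yf 1 t + Yf 2 t)).
Proof.
  eapply der_ext. apply is_derive_PSeries. apply cx_ps.
  rewrite (PSeries_ext _ (fun k => (-(INR n - 1)) * cy 0 k + (- ga) * cy 1 k + (-1) * cy 2 k)).
  rewrite PS_lin3 by apply exy. unfold Yf; ring.
  intros k. rewrite dcx. simpl Lr. unfold cy. field. apply INR_fact_neq_0.
Qed.
Lemma dY1 t : is_derive (Yf 1) t ((INR n - 1) * Xf 0 t + ga * Xf 1 t + Xf 2 t).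
Proof.
  eapply der_ext. apply is_derive_PSeries. apply cy_ps.
  rewrite (PSeries_ext _ (fun k => (INR n - 1) * cx 0 k + ga * cx 1 k + 1 * cx 2 k)).
  rewrite PS_lin3 by apply exx. unfold Xf; ring.
  intros k. rewrite dcy. simpl Lr. unfold cx. field. apply INR_fact_neq_0.
Qed.
Lemma dXp p t : is_derive (Xf (S (S p))) t (-(Yf (S p) t + Yf (S (S (S p))) t)).
Proof.
  eapply der_ext. apply is_derive_PSeries. apply cx_ps.
  rewrite (PSeries_ext _ (fun k => (-1) * cy (S p) k + (-1) * cy (S (S (S p))) k)).
  rewrite PS_lin2 by apply exy. unfold Yf; ring.
  intros k. rewrite dcx. simpl Lr. unfold cy. field. apply INR_fact_neq_0.
Qed.
Lemma dYp p t : is_derive (Yf (S (S p))) t (Xf (S p) t + Xf (S (S (S p))) t).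
Proof.
  eapply der_ext. apply is_derive_PSeries. apply cy_ps.
  rewrite (PSeries_ext _ (fun k => 1 * cx (S p) k + 1 * cx (S (S (S p))) k)).
  rewrite PS_lin2 by apply exx. unfold Xf; ring.
  intros k. rewrite dcy. simpl Lr. unfold cx. field. apply INR_fact_neq_0.
Qed.

Lemma Xf_init0 : Xf 0 0 = / sqrt (INR n).
Proof. unfold Xf. rewrite PSeries_0. unfold cx, g, gk. simpl. field.
  apply Rgt_not_eq, sqrt_lt_R0. apply (lt_INR 0); lia. Qed.
Lemma Xf_init1 : Xf 1 0 = / sqrt (INR n).
Proof. unfold Xf. rewrite PSeries_0. unfold cx, g, gk. simpl. field.
  apply Rgt_not_eq, sqrt_lt_R0. apply (lt_INR 0); lia. Qed.
Lemma Yf_init p : Yf p 0 = 0.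
Proof. unfold Yf. rewrite PSeries_0. unfold cy. simpl. lra. Qed.
Lemma Xf_initp p : Xf (S (S p)) 0 = 0.
Proof. unfold Xf. rewrite PSeries_0. unfold cx, g, gk. simpl. lra. Qed.

End N.

Lemma pow_cs t k : pow_n (Copp (Cmult Ci (RtoC t))) k = (fst (cs k) * t ^ k, - (snd (cs k) * t ^ k)).
Proof.
  induction k.
  - simpl. apply injective_projections; simpl; ring.
  - simpl pow_n. rewrite IHk. simpl cs. unfold mult; simpl. unfold Copp, Cmult, Ci, RtoC; simpl.
    apply injective_projections; simpl; ring.
Qed.

Lemma amp_term_eq n ga t k : (2 <= n)%nat ->
  amp_term n ga t k = (cx n ga 1 k * t ^ k, - (cy n ga 1 k * t ^ k)).
Proof.
  intros Hn. unfold amp_term. rewrite Hpow_emb by auto. rewrite pow_cs.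
  unfold emb. destruct (Nat.eqb_spec n 0); [lia|]. destruct (Nat.ltb_spec0 n n); [lia|].
  replace (n - n + 1)%nat with 1%nat by lia.
  unfold cx, cy. pose proof (INR_fact_neq_0 k).
  unfold Cdiv, Cmult, Cinv, RtoC; simpl. apply injective_projections; simpl; field; auto.
Qed.

Lemma sum_n_pair (f g : nat -> R) N : sum_n (fun k => ((f k, g k) : C)) N = (sum_n f N, sum_n g N).
Proof.
  induction N.
  - rewrite !sum_O. reflexivity.
  - rewrite !sum_Sn, IHN. reflexivity.
Qed.

Lemma lim_C (s : nat -> C) (l : C) : filterlim s eventually (locally l) ->
  lim (T := C_CompleteNormedModule) (filtermap s eventually) = l.
Proof.
  intros H.
  assert (HP : ProperFilter (filtermap s eventually)).
  { apply filtermap_proper_filter. apply eventually_filter. }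
  assert (Hc : cauchy (filtermap s eventually)).
  { apply cauchy_distance; auto. intros eps.
    exists (ball l (pos_div_2 eps)). split.
    - apply H. exists (pos_div_2 eps). auto.
    - intros u v Hu Hv. replace (pos eps) with (pos_div_2 eps + pos_div_2 eps) by (simpl; field).
      eapply ball_triangle. apply ball_sym. exact Hu. exact Hv. }
  pose proof (complete_cauchy (T := C_CompleteNormedModule) _ HP Hc) as Hl.
  apply (@is_filter_lim_unique C_AbsRing C_NormedModule (filtermap s eventually) (Proper_StrongProper _ HP)).
  - intros P [eps Heps]. eapply filter_imp. apply Heps. apply Hl.
  - exact H.
Qed.

Lemma ser_R (a : nat -> R) (x : R) : ex_pseries a x ->
  is_series (fun k => a k * x ^ k) (PSeries a x).
Proof.
  intros H. pose proof (PSeries_correct a x H) as Hc. unfold is_pseries in Hc.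
  assert (Hs : is_series (fun k => a k * x ^ k) (PSeries a x)).
  { eapply is_series_ext; [|exact Hc]. intros k. rewrite Rmult_comm. rewrite <- (pow_n_pow x k). reflexivity. }
  exact Hs.
Qed.

Lemma amp_eq n ga t : (2 <= n)%nat -> amp n ga t = (Xf n ga 1 t, - Yf n ga 1 t).
Proof.
  intros Hn. unfold amp. apply lim_C.
  apply (filterlim_ext (fun N => (sum_n (fun k => cx n ga 1 k * t ^ k) N,
                                 sum_n (fun k => - (cy n ga 1 k * t ^ k)) N) : C)).
  { intros N. rewrite <- sum_n_pair. apply sum_n_ext. intros k. rewrite amp_term_eq by auto. reflexivity. }
  apply filterlim_locally. intros eps.
  pose proof (ser_R _ t (exx n ga Hn 1 t)) as H1.
  pose proof (ser_R _ t (exy n ga Hn 1 t)) as H2.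
  apply is_series_opp in H2.
  unfold is_series in H1, H2.
  pose proof (proj1 (@filterlim_locally nat R_UniformSpace eventually _ _ _) H1 eps) as H1'.
  pose proof (proj1 (@filterlim_locally nat R_UniformSpace eventually _ _ _) H2 eps) as H2'.
  clear H1 H2. rename H1' into H1. rename H2' into H2.
  eapply filter_imp; [|exact (filter_and _ _ H1 H2)].
  intros N [B1 B2]. split.
  - exact B1.
  - exact B2.
Qed.

Lemma exp_le x y : x <= y -> exp x <= exp y.
Proof. intros H. destruct (Rle_lt_or_eq_dec x y H). apply Rlt_le, exp_increasing; auto. subst; lra. Qed.

Lemma rev_tri a b c e : Rabs (sqrt (a^2 + b^2) - sqrt (c^2 + e^2)) <= sqrt ((a - c)^2 + (b - e)^2).
Proof.
  pose proof (Cmod_triangle ((a - c, b - e) : C) (c, e)) as H1.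
  pose proof (Cmod_triangle ((c - a, e - b) : C) (a, b)) as H2.
  unfold Cmod, Cplus in H1, H2. simpl fst in H1, H2. simpl snd in H1, H2.
  replace (a - c + c) with a in H1 by ring. replace (b - e + e) with b in H1 by ring.
  replace (c - a + a) with c in H2 by ring. replace (e - b + b) with e in H2 by ring.
  replace ((c - a) ^ 2 + (e - b) ^ 2) with ((a - c) ^ 2 + (b - e) ^ 2) in H2 by ring.
  apply Rabs_le. lra.
Qed.

Lemma Hbd_lemma (nn d t : R) : 2 <= nn ->
  let w := sqrt (d ^ 2 + nn - 1) in
  (/ sqrt nn) ^ 2 * (cos (w * t) ^ 2 + ((w ^ 2 - d ^ 2 + d) / w) ^ 2 * sin (w * t) ^ 2) <= 4.
Proof.
  intros Hnn w.
  assert (Hw2 : w ^ 2 = d ^ 2 + nn - 1) by (apply pow2_sqrt; nra).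
  assert (Hwp : 0 < w) by (apply sqrt_lt_R0; nra). clearbody w.
  assert (Hz : (/ sqrt nn) ^ 2 = / nn) by (rewrite pow_inv, pow2_sqrt; lra).
  rewrite Hz. rewrite Hw2.
  assert (Hk : ((d ^ 2 + nn - 1 - d ^ 2 + d) / w) ^ 2 <= 2 * nn).
  { replace (((d ^ 2 + nn - 1 - d ^ 2 + d) / w) ^ 2) with ((nn - 1 + d) ^ 2 / w ^ 2) by (field; lra).
    rewrite Hw2. apply (Rmult_le_reg_r (d ^ 2 + nn - 1)). nra.
    field_simplify. 
    + assert (0 <= (nn - 1) * (d - 1)^2) by (apply Rmult_le_pos; [lra|apply pow2_ge_0]).
      assert (0 <= nn * d^2) by (apply Rmult_le_pos; [lra|apply pow2_ge_0]). nra.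
    + pose proof (pow2_ge_0 d). lra. }
  pose proof (sin2_cos2 (w * t)). unfold Rsqr in H.
  assert (cos (w * t) ^ 2 + ((d ^ 2 + nn - 1 - d ^ 2 + d) / w) ^ 2 * sin (w * t) ^ 2 <= 1 + 2 * nn).
  { pose proof (pow2_ge_0 (sin (w*t))). pose proof (pow2_ge_0 (cos (w*t))).
    assert (sin (w * t) ^ 2 <= 1) by nra. 
    assert (((d ^ 2 + nn - 1 - d ^ 2 + d) / w) ^ 2 * sin (w * t) ^ 2 <= 2 * nn * 1).
    { apply Rmult_le_compat; auto. apply pow2_ge_0. }
    nra. }
  apply (Rmult_le_reg_l nn). lra.
  match goal with |- nn * (/ nn * ?X) <= _ => replace (nn * (/ nn * X)) with X by (field; lra) end.
  lra.
Qed.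

Lemma pow_le_one x k : 0 <= x <= 1 -> x ^ k <= 1.
Proof. intros H. induction k; simpl. lra. pose proof (pow_le x k (proj1 H)). nra. Qed.
Lemma pow_decr x i j : 0 <= x <= 1 -> (i <= j)%nat -> x ^ j <= x ^ i.
Proof. intros H Hij. replace j with (i + (j - i))%nat by lia. rewrite pow_add.
  pose proof (pow_le_one x (j - i) H). pose proof (pow_le x i (proj1 H)). nra. Qed.

Definition cc (nn ga : R) := (nn - 2 + ga) / 2.
Definition dd (nn ga : R) := (ga - (nn - 2)) / 2.
Definition ww (nn ga : R) := sqrt (dd nn ga ^ 2 + nn - 1).
Definition Tn (n : nat) := PI / (2 * sqrt (INR n)).
Definition Bn (n : nat) (ga : R) :=
  let nn := INR n in let c := cc nn ga in let d := dd nn ga in let w := ww nn ga in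
  sqrt (cfX c w (/ sqrt nn) ((w ^ 2 - d ^ 2 + d) / w) (Tn n) ^ 2
      + cfY c w (/ sqrt nn) ((w ^ 2 - d ^ 2 + d) / w) (Tn n) ^ 2).

Lemma per_n n ga : (2 <= n)%nat ->
  Rabs (Cmod (amp n ga (Tn n)) - Bn n ga) <= (1 + 2 * PI) / sqrt (INR n).
Proof.
  intros Hn.
  assert (Hnn : 2 <= INR n) by (apply (le_INR 2); lia).
  unfold Bn. cbv zeta. rewrite amp_eq by auto. unfold Cmod. simpl fst. simpl snd.
  replace ((- Yf n ga 1 (Tn n)) ^ 2) with (Yf n ga 1 (Tn n) ^ 2) by ring.
  assert (Hsn : 0 < sqrt (INR n)) by (apply sqrt_lt_R0; lra).
  assert (HT : 0 <= Tn n). { unfold Tn. pose proof PI_RGT_0. apply Rlt_le. apply Rdiv_lt_0_compat; lra. }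
  assert (Hw2 : ww (INR n) ga ^ 2 = dd (INR n) ga ^ 2 + INR n - 1)
    by (unfold ww; apply pow2_sqrt; pose proof (pow2_ge_0 (dd (INR n) ga)); lra).
  assert (Hwp : 0 < ww (INR n) ga) by (unfold ww; apply sqrt_lt_R0; pose proof (pow2_ge_0 (dd (INR n) ga)); lra).
  assert (Hcd1 : cc (INR n) ga - dd (INR n) ga = INR n - 2) by (unfold cc, dd; field).
  assert (Hcd2 : cc (INR n) ga + dd (INR n) ga = ga) by (unfold cc, dd; field).
  remember (cc (INR n) ga) as c eqn:Hc. remember (dd (INR n) ga) as d eqn:Hd.
  remember (ww (INR n) ga) as w eqn:Hw. remember (Tn n) as T eqn:HTdef.
  unfold Tn in HTdef.
  assert (Hw0 : w <> 0) by lra.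
  assert (Hwd : w ^ 2 - d ^ 2 = INR n - 1) by (rewrite Hw2; ring).
  remember (INR n + Rabs ga + 2) as K eqn:HKdef.
  assert (HK : 0 <= K) by (pose proof (Rabs_pos ga); lra).
  remember (exp (2 * K * T)) as E0 eqn:HE0def.
  assert (HE0 : 0 < E0) by (rewrite HE0def; apply exp_pos).
  destruct (pow_lt_1_zero (/2) ltac:(rewrite Rabs_right; lra) (/ (INR n * E0)))
    as [m Hm].
  { apply Rinv_0_lt_compat, Rmult_lt_0_compat; lra. }
  remember ((/2) ^ (m + 1) * E0) as eps eqn:Hepsdef.
  assert (Heps : 0 <= eps /\ eps <= / INR n).
  { specialize (Hm (m + 1)%nat ltac:(lia)). rewrite Rabs_right in Hm.
    2:{ apply Rle_ge, pow_le; lra. }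
    split. rewrite Hepsdef. apply Rmult_le_pos; [apply pow_le; lra | lra].
    rewrite Hepsdef. apply Rlt_le. apply (Rmult_lt_reg_r (/ E0)). apply Rinv_0_lt_compat; lra.
    replace ((/ 2) ^ (m + 1) * E0 * / E0) with ((/2) ^ (m + 1)) by (field; lra).
    replace (/ INR n * / E0) with (/ (INR n * E0)) by (field; lra). exact Hm. }
  assert (Hbp : forall p t, 0 <= t <= T -> (m + 2 <= p)%nat ->
             Rabs (Xf n ga p t) <= eps /\ Rabs (Yf n ga p t) <= eps).
  { intros p t Ht Hp.
    assert (Hpow : (/2) ^ (p - 1) <= (/2) ^ (m + 1)).
    { apply pow_decr; [lra | lia]. }
    assert (Hex : exp (2 * K * Rabs t) <= E0).
    { rewrite HE0def. apply exp_le. rewrite Rabs_right by lra. apply Rmult_le_compat_l; lra. }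
    pose proof (proj2 (cx_ps n ga Hn p t)) as H1. pose proof (proj2 (cy_ps n ga Hn p t)) as H2.
    rewrite <- HKdef in H1, H2.
    assert ((/ 2) ^ (p - 1) * exp (2 * K * Rabs t) <= eps).
    { rewrite Hepsdef. apply Rmult_le_compat; try lra. apply pow_le; lra. left; apply exp_pos. }
    split; lra. }
  set (z := / sqrt (INR n)).
  pose proof (energy (INR n - 1) (INR n - 2) ga T (/ INR n) (2 * eps ^ 2) m (Xf n ga) (Yf n ga)
    (cfX c w z ((1 - d) / w)) (cfY c w z ((1 - d) / w))
    (cfX c w z ((w ^ 2 - d ^ 2 + d) / w)) (cfY c w z ((w ^ 2 - d ^ 2 + d) / w))) as HEn.
  assert (Hrel : sqrt ((Xf n ga 1 T - cfX c w z ((w ^ 2 - d ^ 2 + d) / w) T) ^ 2 +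
                       (Yf n ga 1 T - cfY c w z ((w ^ 2 - d ^ 2 + d) / w) T) ^ 2)
           <= sqrt (/ INR n) + T * (2 + 2 * eps ^ 2 / sqrt (/ INR n))).
  { apply HEn; clear HEn.
    - lra.
    - exact HT.
    - apply Rinv_0_lt_compat; lra.
    - apply dX0; auto.
    - apply dY0; auto.
    - apply dX1; auto.
    - apply dY1; auto.
    - apply dXp; auto.
    - apply dYp; auto.
    - intros t. eapply der_ext. apply ode_xa; auto. rewrite Hcd1. reflexivity.
    - intros t. eapply der_ext. apply ode_ya; auto. rewrite Hcd1. reflexivity.
    - intros t. eapply der_ext. apply ode_xb; auto. rewrite Hwd, Hcd2. reflexivity.
    - intros t. eapply der_ext. apply ode_yb; auto. rewrite Hwd, Hcd2. reflexivity.
    - rewrite Xf_init0 by auto. unfold cfX. rewrite !Rmult_0_r, cos_0, sin_0. unfold z. ring.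
    - rewrite Yf_init. unfold cfY. rewrite !Rmult_0_r, cos_0, sin_0. ring.
    - rewrite Xf_init1 by auto. unfold cfX. rewrite !Rmult_0_r, cos_0, sin_0. unfold z. ring.
    - rewrite Yf_init. unfold cfY. rewrite !Rmult_0_r, cos_0, sin_0. ring.
    - intros p. apply Xf_initp; auto.
    - intros p. apply Yf_init.
    - intros t Ht. rewrite cf_norm. unfold z.
      pose proof (Hbd_lemma (INR n) d t Hnn) as HB. cbv zeta in HB.
      rewrite Hw. unfold ww. rewrite <- Hd. exact HB.
    - intros t Ht.
      destruct (Hbp (m + 2)%nat t Ht ltac:(lia)) as [A1 A2].
      destruct (Hbp (m + 3)%nat t Ht ltac:(lia)) as [A3 A4].
      eapply Rle_trans. apply Rabs_triang. rewrite Rabs_Ropp, !Rabs_mult.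
      pose proof (Rabs_pos (Xf n ga (m + 2) t)). pose proof (Rabs_pos (Xf n ga (m + 3) t)).
      pose proof (Rabs_pos (Yf n ga (m + 2) t)). pose proof (Rabs_pos (Yf n ga (m + 3) t)).
      nra. }
  clear HEn.
  eapply Rle_trans. apply rev_tri. fold z. eapply Rle_trans. exact Hrel.
  rewrite sqrt_inv.
  assert (Hdl : 2 * eps ^ 2 / / sqrt (INR n) <= 2).
  { replace (2 * eps ^ 2 / / sqrt (INR n)) with (2 * eps ^ 2 * sqrt (INR n)) by (field; lra).
    assert (sqrt (INR n) <= INR n).
    { rewrite <- (sqrt_pow2 (INR n)) at 2 by lra. apply sqrt_le_1_alt. nra. }
    destruct Heps as [He1 He2].
    assert (eps * INR n <= 1).
    { apply (Rmult_le_reg_r (/ INR n)). apply Rinv_0_lt_compat; lra.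
      replace (eps * INR n * / INR n) with eps by (field; lra). lra. }
    assert (eps <= 1). { assert (/ INR n <= 1). { rewrite <- Rinv_1. apply Rinv_le_contravar; lra. } lra. }
    assert (eps ^ 2 * sqrt (INR n) <= eps ^ 2 * INR n) by (apply Rmult_le_compat_l; [apply pow2_ge_0|lra]).
    nra. }
  assert (T * (2 + 2 * eps ^ 2 / / sqrt (INR n)) <= T * 4) by (apply Rmult_le_compat_l; lra).
  assert (T * 4 = 2 * PI / sqrt (INR n)) by (rewrite HTdef; field; lra).
  assert (/ sqrt (INR n) + 2 * PI / sqrt (INR n) = (1 + 2 * PI) / sqrt (INR n)) by (field; lra).
  lra.
Qed.

Lemma inv_n_lim : is_lim_seq (fun n => / INR n) 0.
Proof.
  pose proof (is_lim_seq_inv _ _ is_lim_seq_INR) as H. simpl in H. apply H. discriminate.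
Qed.

Lemma bounded_over_n (u : nat -> R) D : (forall n, Rabs (u n) <= D) -> is_lim_seq (fun n => u n / INR n) 0.
Proof.
  intros Hu.
  apply (is_lim_seq_le_le_loc (fun n => - D * / INR n) _ (fun n => D * / INR n)).
  - exists 1%nat. intros n Hn. assert (0 < INR n) by (apply (lt_INR 0); lia).
    pose proof (Hu n). apply Rabs_le_between in H0. unfold Rdiv.
    assert (0 < / INR n) by (apply Rinv_0_lt_compat; lra). split; nra.
  - replace (Finite 0) with (Rbar_mult (- D) 0) by (simpl; f_equal; ring).
    apply is_lim_seq_scal_l, inv_n_lim.
  - replace (Finite 0) with (Rbar_mult D 0) by (simpl; f_equal; ring).
    apply is_lim_seq_scal_l, inv_n_lim.
Qed.

Lemma Bn_lim (gamma : nat -> R) (B : R) : (forall n, Rabs (gamma n - INR n) <= B) ->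
  is_lim_seq (fun n => Bn n (gamma n)) 1.
Proof.
  intros HB.
  set (d := fun n => dd (INR n) (gamma n)).
  assert (Hd : forall n, Rabs (d n) <= (B + 2) / 2).
  { intros n. unfold d, dd. replace ((gamma n - (INR n - 2)) / 2) with ((gamma n - INR n + 2) / 2) by field.
    unfold Rdiv. rewrite Rabs_mult, (Rabs_right (/ 2)) by lra.
    apply Rmult_le_compat_r. lra. eapply Rle_trans. apply Rabs_triang. rewrite (Rabs_right 2) by lra.
    specialize (HB n). lra. }
  set (r := fun n => d n ^ 2 / INR n + 1 - / INR n).
  set (q := fun n => 1 - / INR n + d n / INR n).
  assert (Hr : is_lim_seq r 1).
  { replace 1 with (0 + 1 - 0) by ring. unfold r.
    apply is_lim_seq_minus'; [apply is_lim_seq_plus'|]; [| apply is_lim_seq_const | apply inv_n_lim].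
    apply (bounded_over_n _ (((B + 2) / 2) ^ 2)). intros n. rewrite <- RPow_abs.
    apply pow_maj_Rabs. rewrite Rabs_Rabsolu. apply Hd. }
  assert (Hq : is_lim_seq q 1).
  { replace 1 with (1 - 0 + 0) by ring. unfold q.
    apply is_lim_seq_plus'; [apply is_lim_seq_minus'|]; [apply is_lim_seq_const | apply inv_n_lim |].
    apply (bounded_over_n _ ((B + 2) / 2)). apply Hd. }
  set (a := fun n => PI / 2 * sqrt (r n)).
  assert (Ha : is_lim_seq a (PI / 2)).
  { assert (H1 : is_lim_seq (fun n => PI / 2 * sqrt (r n)) (PI / 2 * sqrt 1)).
    { apply is_lim_seq_mult'. apply is_lim_seq_const.
      apply is_lim_seq_continuous. apply continuity_pt_sqrt; lra. exact Hr. }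
    rewrite sqrt_1, Rmult_1_r in H1. exact H1. }
  assert (Hc : is_lim_seq (fun n => cos (a n)) 0).
  { rewrite <- cos_PI2. apply is_lim_seq_continuous. apply continuity_cos. exact Ha. }
  assert (Hs : is_lim_seq (fun n => sin (a n)) 1).
  { rewrite <- sin_PI2. apply is_lim_seq_continuous. apply continuity_sin. exact Ha. }
  set (ex := fun n => cos (a n) * cos (a n) * / INR n + q n * q n / r n * (sin (a n) * sin (a n))).
  assert (Hex : is_lim_seq ex 1).
  { replace 1 with (0 * 0 * 0 + 1 * 1 / 1 * (1 * 1)) by field. unfold ex.
    apply is_lim_seq_plus'; apply is_lim_seq_mult'.
    - apply is_lim_seq_mult'; auto.
    - apply inv_n_lim.
    - apply is_lim_seq_div'; [apply is_lim_seq_mult'; auto | auto | lra].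
    - apply is_lim_seq_mult'; auto. }
  apply (is_lim_seq_ext_loc (fun n => sqrt (ex n))).
  2:{ rewrite <- sqrt_1. apply is_lim_seq_continuous. apply continuity_pt_sqrt; lra. exact Hex. }
  exists 2%nat. intros n Hn.
  assert (Hnn : 2 <= INR n) by (apply (le_INR 2); lia).
  unfold Bn. cbv zeta. rewrite cf_norm. f_equal.
  set (D := dd (INR n) (gamma n)) in *. set (w := ww (INR n) (gamma n)) in *.
  assert (Hw2 : w ^ 2 = D ^ 2 + INR n - 1)
    by (unfold w, ww; fold D; apply pow2_sqrt; pose proof (pow2_ge_0 D); lra).
  assert (Hwp : 0 < w) by (unfold w, ww; fold D; apply sqrt_lt_R0; pose proof (pow2_ge_0 D); lra).
  assert (Hsn : 0 < sqrt (INR n)) by (apply sqrt_lt_R0; lra).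
  assert (HD2 : 0 < D ^ 2 + INR n - 1) by (pose proof (pow2_ge_0 D); lra).
  assert (Har : a n = w * Tn n).
  { unfold a, r, d, Tn. fold D.
    replace (D ^ 2 / INR n + 1 - / INR n) with ((D ^ 2 + INR n - 1) / INR n) by (field; lra).
    rewrite sqrt_div_alt by lra. rewrite <- Hw2. rewrite sqrt_pow2 by lra. field. lra. }
  unfold ex. rewrite Har. unfold q, r, d. fold D.
  clearbody w D.
  assert (Hk : ((w ^ 2 - D ^ 2 + D) / w) ^ 2 = (INR n - 1 + D) ^ 2 / (D ^ 2 + INR n - 1)).
  { replace (w ^ 2 - D ^ 2 + D) with (INR n - 1 + D) by (rewrite Hw2; ring). rewrite <- Hw2. field. lra. }
  rewrite Hk. rewrite pow_inv, pow2_sqrt by lra.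
  field. repeat split; try lra.
Qed.

Theorem mainTheorem2 (gamma : nat -> R)
  (Hgamma : exists B : R, forall n : nat, Rabs (gamma n - INR n) <= B) :
  is_lim_seq
    (fun n : nat => Cmod (amp n (gamma n) (PI / (2 * sqrt (INR n))))) 1.
Proof.
  destruct Hgamma as [B HB].
  pose proof (Bn_lim gamma B HB) as HBn.
  assert (He : is_lim_seq (fun n => (1 + 2 * PI) / sqrt (INR n)) 0).
  { apply (is_lim_seq_ext (fun n => (1 + 2 * PI) * sqrt (/ INR n))).
    { intros n. rewrite sqrt_inv. reflexivity. }
    replace (Finite 0) with (Rbar_mult (1 + 2 * PI) 0) by (simpl; f_equal; ring).
    apply is_lim_seq_scal_l.
    rewrite <- sqrt_0. apply is_lim_seq_continuous. apply continuity_pt_sqrt; lra. apply inv_n_lim. }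
  apply (is_lim_seq_le_le_loc (fun n => Bn n (gamma n) - (1 + 2 * PI) / sqrt (INR n)) _
                              (fun n => Bn n (gamma n) + (1 + 2 * PI) / sqrt (INR n))).
  - exists 2%nat. intros n Hn. pose proof (per_n n (gamma n) Hn) as H.
    apply Rabs_le_between in H. unfold Tn in H. lra.
  - replace (Finite 1) with (Finite (1 - 0)) by (f_equal; ring). apply is_lim_seq_minus'; auto.
  - replace (Finite 1) with (Finite (1 + 0)) by (f_equal; ring). apply is_lim_seq_plus'; auto.
Qed.
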